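(* Let $G$ be a connected graph with at least two vertices and let $\sigma=(v_1,\dots,v_n)$ be a layered search ordering of $G$. If the $\mathcal{F}$-tree of $\sigma$ has at most $k$ leaves, then the bandwidth of $\sigma$ is at most $2k-1$.
   Context: All graphs are finite, simple, undirected, connected and non-empty. A search ordering of $G$ is an ordering $(v_1,\dots,v_n)$ of $V(G)$ such that every $v_i$ with $i>1$ has a neighbor among $v_1,\dots,v_{i-1}$. A layered search ordering is a search ordering in which the distance $d_G(v_1,v_i)$ is non-decreasing in $i$ (the distance layers of the start vertex are traversed in increasing order). The $\mathcal{F}$-tree (first-in tree) of a search ordering $\sigma=(v_1,\dots,v_n)$ is the spanning tree rooted at $v_1$ in which the parent of each $v_i$, $i>1$, is the neighbor of $v_i$ that appears leftmost in $\sigma$. A leaf of a rooted tree is a non-root vertex without children (the root is never counted as a leaf, even if it has degree 1). The bandwidth of an ordering $\sigma=(v_1,\dots,v_n)$ is $\max_{v_iv_j\in E(G)}|i-j|$. *)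

(* Defs.v *)
From mathcomp Require Import all_boot.
Set Implicit Arguments. Unset Strict Implicit. Unset Printing Implicit Defensive.

Definition simple_graph (T : finType) (e : rel T) : Prop :=
  symmetric e /\ irreflexive e.

Definition connected_graph (T : finType) (e : rel T) : Prop :=
  forall x y : T, connect e x y.

Definition walk_len (T : finType) (e : rel T) (n : nat) (x y : T) : bool :=
  [exists p : n.-tuple T, path e x p && (last x p == y)].

(* graph distance: least n with a walk of length n (in a connected graph
   the distance is < #|T|). *)
Definition gdist (T : finType) (e : rel T) (x y : T) : nat :=
  find (fun n => walk_len e n x y) (iota 0 #|T|).

Definition is_ordering (T : finType) (s : seq T) : Prop :=
  uniq s /\ forall x : T, x \in s.

Definition search_ordering (T : finType) (e : rel T) (s : seq T) : Prop :=
  is_ordering s /\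
  forall i, 0 < i < size s -> forall x0 : T,
    has (e (nth x0 s i)) (take i s).

Definition layered_search_ordering (T : finType) (e : rel T) (s : seq T) : Prop :=
  search_ordering e s /\
  forall x0 : T, forall i j, i <= j < size s ->
    gdist e (nth x0 s 0) (nth x0 s i) <= gdist e (nth x0 s 0) (nth x0 s j).

Definition ftree_parent (T : finType) (e : rel T) (s : seq T) (v : T) : T :=
  nth v s (find (e v) s).

Definition ftree_leaves (T : finType) (e : rel T) (s : seq T) (r : T) : {set T} :=
  [set v | (v != r) &&
     [forall u, (u != r) ==> (ftree_parent e s u != v)]].

Definition bandwidth (T : finType) (e : rel T) (s : seq T) : nat :=
  \max_(u : T) \max_(v : T | e u v)
     maxn (index u s - index v s) (index v s - index u s).

(* Main.v *)
Require Import Defs.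
From mathcomp Require Import all_boot zify.
Set Implicit Arguments. Unset Strict Implicit.

Lemma walkP (T : finType) (e : rel T) n x y :
  reflect (exists p : seq T, [/\ size p = n, path e x p & last x p = y]) (walk_len e n x y).
Proof.
apply: (iffP existsP) => [[p /andP[hp /eqP hl]]|[p [hs hp hl]]].
  by exists (val p); rewrite size_tuple.
have hs' : size p == n by rewrite hs.
by exists (Tuple hs'); rewrite /= hp hl eqxx.
Qed.

Lemma walk_ex (T : finType) (e : rel T) x y :
  connect e x y -> exists2 n, n < #|T| & walk_len e n x y.
Proof.
case/connectP=> p hp ->.
case: (shortenP hp) => q hq huq _ .
exists (size q); last by apply/walkP; exists q.
have := card_uniqP huq; rewrite /= => hc.
by rewrite -[_ < _]/((size q).+1 <= _) -hc max_card.
Qed.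

Lemma gdist_walk (T : finType) (e : rel T) x y :
  connect e x y -> gdist e x y < #|T| /\ walk_len e (gdist e x y) x y.
Proof.
move=> /walk_ex[n hn hw].
have hh : has (fun n => walk_len e n x y) (iota 0 #|T|).
  by apply/hasP; exists n => //; rewrite mem_iota.
have hf : gdist e x y < #|T| by rewrite /gdist -{2}(size_iota 0 #|T|) -has_find.
split=> //; have := nth_find 0 hh.
by rewrite nth_iota // add0n.
Qed.

Lemma gdist_min (T : finType) (e : rel T) x y m :
  m < #|T| -> walk_len e m x y -> gdist e x y <= m.
Proof.
move=> hm hw; rewrite leqNgt; apply/negP => hlt.
have := before_find 0 hlt; rewrite nth_iota ?add0n ?hw //.
Qed.

Lemma gdist_edge (T : finType) (e : rel T) r z y :
  connected_graph e -> e z y -> gdist e r y <= (gdist e r z).+1.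
Proof.
move=> conn ezy.
have [hy _] := gdist_walk (conn r y).
have [hz /walkP [p [hs hp hl]]] := gdist_walk (conn r z).
case: (ltnP (gdist e r z).+1 #|T|) => hlt; last by apply: ltnW; apply: leq_trans hlt.
apply: gdist_min => //; apply/walkP; exists (rcons p y).
by rewrite size_rcons hs rcons_path hp hl ezy last_rcons.
Qed.

Lemma gdist_rr (T : finType) (e : rel T) r : gdist e r r = 0.
Proof.
rewrite /gdist; have : 0 < #|T| by apply/card_gt0P; exists r.
case: #|T| => [|n] //= _.
suff -> : walk_len e 0 r r by [].
by apply/walkP; exists [::].
Qed.

Lemma gdist0 (T : finType) (e : rel T) r y :
  connected_graph e -> gdist e r y = 0 -> y = r.
Proof.
move=> conn h0; have [_] := gdist_walk (conn r y).
by rewrite h0 => /walkP [[|a p] [hs hp hl]].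
Qed.

Lemma gdist_pred (T : finType) (e : rel T) r y :
  connected_graph e -> symmetric e -> y != r ->
  exists2 z, e y z & gdist e r z < gdist e r y.
Proof.
move=> conn sym hyr.
have [hy /walkP [p [hs hp hl]]] := gdist_walk (conn r y).
case/lastP: p hs hp hl => [|q w] hs hp hl.
  by move: hl hyr => /= ->; rewrite eqxx.
move: hp; rewrite rcons_path => /andP[hq hw].
move: hl; rewrite last_rcons => hwy; subst w.
exists (last r q); first by rewrite sym.
apply: (@leq_ltn_trans (size q)); last by rewrite -hs size_rcons.
apply: gdist_min; first by apply: leq_ltn_trans hy; rewrite -hs size_rcons.
by apply/walkP; exists q.
Qed.

Theorem corollary3p2 (T : finType) (e : rel T) (s : seq T) (k : nat) :
  simple_graph e -> connected_graph e -> 2 <= #|T| ->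
  layered_search_ordering e s ->
  forall r : T,
  #|ftree_leaves e s (head r s)| <= k ->
  bandwidth e s <= 2 * k - 1.
Proof.
move=> [sym irr] conn hT [[[uniqs alls] _] lay] r hk.
set r0 := head r s.
set D := fun x => gdist e r0 x.
set P := fun x => index x s.
have mono : forall x y, P x <= P y -> D x <= D y.
  move=> x y hxy; have := lay r (P x) (P y).
  rewrite hxy /P index_mem alls !nth_index // nth0; exact.
have hpar : forall u, u != r0 ->
    e u (ftree_parent e s u) /\ (D (ftree_parent e s u)).+1 = D u.
  move=> u hu; have [z euz hz] := gdist_pred conn sym hu.
  have hh : has (e u) s by apply/hasP; exists z.
  have epar : e u (ftree_parent e s u) := nth_find u hh.
  have hle : find (e u) s <= P z.
    rewrite leqNgt; apply/negP => /(before_find u).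
    by rewrite /P nth_index // euz.
  have hp : P (ftree_parent e s u) = find (e u) s.
    by rewrite /P /ftree_parent index_uniq // -has_find.
  have d1 : D (ftree_parent e s u) <= D z by apply: mono; rewrite hp.
  have d2 : D u <= (D (ftree_parent e s u)).+1.
    by apply: gdist_edge => //; rewrite sym.
  split => //; apply/eqP; rewrite eqn_leq d2 andbT.
  exact: leq_ltn_trans d1 hz.
have hD0 : D r0 = 0 by apply: gdist_rr.
have hDpos : forall x, x != r0 -> 0 < D x.
  move=> x hx; rewrite lt0n; apply/eqP => h.
  by move: hx; rewrite (gdist0 conn h) eqxx.
have hiter : forall n x, n <= D x -> D (iter n (ftree_parent e s) x) = D x - n.
  elim=> [|n IH] x hn; first by rewrite subn0.
  have h := IH x (ltnW hn).
  have hne : iter n (ftree_parent e s) x != r0.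
    apply/eqP => heq; move: h; rewrite heq hD0; lia.
  rewrite iterS; have [_ h2] := hpar _ hne; lia.
have layer : forall d, 0 < d ->
    #|[set x | D x == d]| <= #|ftree_leaves e s r0|.
  move=> d hd.
  pose f := fun l => iter (D l - d) (ftree_parent e s) l.
  have sub : [set x | D x == d] \subset
             f @: [set l in ftree_leaves e s r0 | d <= D l].
    apply/subsetP => w; rewrite inE => /eqP hw.
    pose Q := fun x => (d <= D x) && (f x == w).
    have Qw : Q w by rewrite /Q hw leqnn /f hw subnn eqxx.
    case: (arg_maxnP D Qw) => x /andP[hdx /eqP hfx] hmax.
    apply/imsetP; exists x => //; rewrite inE hdx andbT.
    have xr : x != r0.
      by apply/eqP=> h; move: hdx; rewrite h hD0; lia.
    rewrite /ftree_leaves inE xr /=; apply/forallP => u; apply/implyP => ur.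
    apply/eqP => hux.
    have [_ hD] := hpar u ur; rewrite hux in hD.
    have Qu : Q u.
      rewrite /Q -hD (leq_trans hdx (leqnSn _)) /f -hD subSn //.
      by rewrite iterSr hux; apply/eqP.
    by move: (hmax u Qu); rewrite /= -hD ltnn.
  apply: leq_trans (subset_leq_card sub) _.
  apply: leq_trans (leq_imset_card _ _) _; apply: subset_leq_card.
  by apply/subsetP => l; rewrite inE => /andP[].
have [x hx] : exists x, x != r0.
  have : 1 < #|T| by [].
  case/card_gt1P => a [b [_ _ hab]].
  case: (eqVneq a r0) => [har|har]; last by exists a.
  by exists b; rewrite -har eq_sym.
have k1 : 0 < k.
  have : 0 < #|[set y | D y == D x]| by apply/card_gt0P; exists x; rewrite inE.
  move/leq_trans; apply; apply: leq_trans (layer _ (hDpos _ hx)) hk.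
have lay_all : forall d, #|[set x | D x == d]| <= k.
  case=> [|d]; last by apply: leq_trans (layer _ _) hk.
  apply: leq_trans k1; rewrite -(cards1 r0); apply: subset_leq_card.
  apply/subsetP => y; rewrite !inE => /eqP h; apply/eqP; exact: gdist0 conn h.
have edge : forall u v, e u v -> P v - P u <= 2 * k - 1.
  move=> u v euv.
  case: (leqP (P v) (P u)) => h.
    by rewrite -subn_eq0 in h; rewrite (eqP h).
  have dv : D v <= (D u).+1 := gdist_edge r0 conn euv.
  have du : D u <= D v := mono _ _ (ltnW h).
  have hvs : P v < size s by rewrite /P index_mem alls.
  pose sq := [seq nth r s i | i <- iota (P u) (P v - P u).+1].
  have usq : uniq sq.
    rewrite map_inj_in_uniq ?iota_uniq // => i j.
    rewrite !mem_iota addnS subnKC ?(ltnW h) // !ltnS.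
    move=> /andP[_ hi] /andP[_ hj] /eqP; rewrite nth_uniq //; first by move/eqP.
      exact: leq_ltn_trans hi hvs.
    exact: leq_ltn_trans hj hvs.
  have ssub : {subset sq <= [set y | D y == D u] :|: [set y | D y == D v]}.
    move=> y /mapP [i]; rewrite mem_iota => hi ->.
    have his : i < size s by lia.
    have hPi : P (nth r s i) = i by rewrite /P index_uniq.
    have h1 := mono u (nth r s i) ltac:(rewrite hPi; lia).
    have h2 := mono (nth r s i) v ltac:(rewrite hPi; lia).
    rewrite !inE; apply/orP.
    case: (eqVneq (D (nth r s i)) (D u)) => hh; [by left | right; apply/eqP; lia].
  have hs' : (P v - P u).+1 <= #|[set y | D y == D u] :|: [set y | D y == D v]|.
    have := card_uniqP usq; rewrite size_map size_iota => <-.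
    by apply: subset_leq_card; apply/subsetP.
  have [hc _] := leq_card_setU [set y | D y == D u] [set y | D y == D v].
  have := leq_trans hs' hc.
  have := lay_all (D u); have := lay_all (D v); lia.
rewrite /bandwidth; apply/bigmax_leqP => u _; apply/bigmax_leqP => v euv.
by rewrite geq_max; apply/andP; split; [apply: (edge v u); rewrite sym | apply: edge].
Qed.
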